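(* Let $S$ be a finite virtual flat biquandle, $A$ an abelian group without 2-torsion, $\phi:S\times S\to A$ a 2-cocycle of both $\mathrm{Hom}(C^{VF}_\ast(S),A)$ and $\mathrm{Hom}(C^{SF}_\ast(S),A)$, and $\phi'$ a 2-coboundary of $\mathrm{Hom}(C^{VF}_\ast(S),A)$, i.e. $\phi'(a,b)=\eta(\partial_2(a,b))=-\eta(b)+\eta(b\circ a)+\eta(a\ast b)-\eta(a)$ for some map $\eta:S\to A$. Then $\phi+\phi'$ is a 2-cocycle of $\mathrm{Hom}(C^{SF}_\ast(S),A)$, and $\Phi_\phi(L)=\Phi_{\phi+\phi'}(L)$ for every oriented flat virtual link diagram $L$.
   Context: A virtual flat biquandle is a set $S$ with two binary operations $a\ast b$, $a\circ b$; writing $S_b(a)=a\ast b$, $T_b(a)=a\circ b$, for all $a,b$: $S_aS_b=S_bS_a$, $T_aT_b=T_bT_a$, $S_aT_b=T_bS_a$; $S_a=S_{T_b(a)}=S_{S_b(a)}$, $T_a=T_{S_b(a)}=T_{T_b(a)}$; $T_aS_a=S_aT_a=\mathrm{id}$. Complexes: $C_n(S)$ is free abelian on $n$-tuples of elements of $S$. $C^{VF}_\ast(S)=C_\ast(S)/C'_\ast(S)$ with boundary $\partial_n(a_1,\dots,a_n)=\sum_{i=1}^n(-1)^i((a_1\ast a_i,\dots,a_{i-1}\ast a_i,a_{i+1},\dots,a_n)-(a_1,\dots,a_{i-1},a_{i+1}\circ a_i,\dots,a_n\circ a_i))$ for $n\ge2$ ($\partial_n=0$ for $n\le1$), where $C'_n(S)$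 ($n\ge2$) is generated by $(a_1,\dots,a_i,a_{i+1},\dots,a_n)+(a_1,\dots,a_{i+1}\circ a_i,a_i\ast a_{i+1},\dots,a_n)$ and $C'_n(S)=0$ for $n\le1$. $C^{SF}_\ast(S)=C_\ast(S)$ with boundary $d_n(a_1,\dots,a_n)=\sum_{i=1}^{n-1}(-1)^i((a_1,\dots,\widehat{a_i},\dots,a_n)-(a_1,\dots,\widehat{a_i},\dots,a_{n-1},a_n\circ a_i))$. A map $S\times S\to A$ extended linearly is a 2-cochain; cocycle/coboundary are with respect to the dual coboundary maps. Flat virtual link diagrams have flat crossings (no over/under information) and virtual crossings. A v-arc is a part of the diagram between consecutive virtual crossings. A coloring $\theta$ assigns an element of $S$ to each v-arc such that at each virtual crossing $\tau$, rotated so both strands point downward, if the incoming upper-left v-arc has color $a$ and the incoming upper-right v-arc has color $b$, then the outgoing arc continuing the upper-left strand has color $a\ast b$ and the outgoing arc continuing the upper-right strand has color $b\circ a$; for a map $\psi:S\times S\to A$ the weight of $\tau$ is $\psi(a,b)$. The state-sum is $\Phi_\psi(L)=\sum_\theta\big[\sum_\tau \psi(a_\tau,b_\tau)\big]\in\mathbb{Z}[A]$, where $[x]$ is the group ring basis element of $x\in A$ and the sum is over all colorings. *)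

(* Defs.v *)
From mathcomp Require Import all_boot all_order all_algebra all_fingroup.
Set Implicit Arguments. Unset Strict Implicit. Unset Printing Implicit Defensive.
Import GRing.Theory.
Local Open Scope ring_scope.

Section VFB.
Variable S : finType.
Variables (ast circ : S -> S -> S).   (* ast a b = a * b,  circ a b = a o b *)

(* Virtual flat biquandle axioms; S_b(a) = ast a b, T_b(a) = circ a b. *)
Definition is_vfbiquandle : Prop :=
  (forall a b x, ast (ast x b) a = ast (ast x a) b) /\
      (forall a b x, circ (circ x b) a = circ (circ x a) b) /\
      (forall a b x, ast (circ x b) a = circ (ast x a) b) /\
      (forall a b x, ast x a = ast x (circ a b) /\ ast x a = ast x (ast a b)) /\
      (forall a b x, circ x a = circ x (ast a b) /\ circ x a = circ x (circ a b)) /\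
    (forall a x, circ (ast x a) a = x /\ ast (circ x a) a = x).

(* Chains of C_*(S): formal Z-combinations of tuples, as lists (coeff, tuple). *)
Definition chain := seq (int * seq S).

(* boundary of C^VF_*(S):
   partial_n(a_1..a_n) = sum_{i=1}^n (-1)^i ((a_1*a_i,..,a_{i-1}*a_i,a_{i+1},..,a_n)
                                          - (a_1,..,a_{i-1},a_{i+1}oa_i,..,a_n o a_i)),
   and 0 for n <= 1.  Index j = i - 1. *)
Definition bdVF (t : seq S) : chain :=
  match t with
  | [::] => [::]
  | x0 :: _ =>
    if (size t < 2)%N then [::] else
    flatten [seq (let ai := nth x0 t j in
                  let sg : int := (-1) ^+ j.+1 in
                  [:: (sg, map (fun x => ast x ai) (take j t) ++ drop j.+1 t);
                      (- sg, take j t ++ map (fun x => circ x ai) (drop j.+1 t))])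
            | j <- iota 0 (size t)]
  end.

(* boundary of C^SF_*(S):
   d_n(a_1..a_n) = sum_{i=1}^{n-1} (-1)^i ((a_1,..,^a_i,..,a_n)
                                   - (a_1,..,^a_i,..,a_{n-1}, a_n o a_i)). *)
Definition bdSF (t : seq S) : chain :=
  match t with
  | [::] => [::]
  | x0 :: _ =>
    let n := size t in
    let an := last x0 t in
    flatten [seq (let ai := nth x0 t j in
                  let sg : int := (-1) ^+ j.+1 in
                  [:: (sg, take j t ++ drop j.+1 t);
                      (- sg, take j t ++ drop j.+1 (take n.-1 t) ++ [:: circ an ai])])
            | j <- iota 0 n.-1]
  end.

(* Generators of C'_n(S) (n >= 2), for 0 <= j < n-1 (j = i - 1):
   (a_1,..,a_i,a_{i+1},..,a_n) + (a_1,..,a_{i+1} o a_i, a_i * a_{i+1},..,a_n). *)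
Definition genC' (t : seq S) (j : nat) : chain :=
  match t with
  | [::] => [::]
  | x0 :: _ =>
    let ai := nth x0 t j in let ai1 := nth x0 t j.+1 in
    [:: (1%R, t); (1%R, take j t ++ [:: circ ai1 ai; ast ai ai1] ++ drop j.+2 t)]
  end.

Variable A : zmodType.

Definition ceval (f : seq S -> A) (c : chain) : A :=
  \sum_(p <- c) (f p.2 *~ p.1).

Definition ev2 (psi : S -> S -> A) (t : seq S) : A :=
  if t is [:: a; b] then psi a b else 0.

Definition ev1 (eta : S -> A) (t : seq S) : A :=
  if t is [:: a] then eta a else 0.

(* psi is a 2-cocycle of Hom(C^VF_*(S), A): it vanishes on C'_2 (so it is
   a cochain on the quotient) and psi o partial_3 = 0. *)
Definition cocycle2VF (psi : S -> S -> A) : Prop :=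
  (forall t j, size t = 2%N -> (j.+1 < size t)%N -> ceval (ev2 psi) (genC' t j) = 0)
  /\ (forall a1 a2 a3 : S, ceval (ev2 psi) (bdVF [:: a1; a2; a3]) = 0).

Definition cocycle2SF (psi : S -> S -> A) : Prop :=
  forall a1 a2 a3 : S, ceval (ev2 psi) (bdSF [:: a1; a2; a3]) = 0.

Definition coboundary2VF (eta : S -> A) : S -> S -> A :=
  fun a b => ceval (ev1 eta) (bdVF [:: a; b]).

End VFB.

(* Each crossing c, rotated so both strands point downward, has two incoming
   slots (c,false) = upper-left, (c,true) = upper-right, and two outgoing slots:
   (c,false) = the outgoing end of the strand entering at upper-left,
   (c,true)  = the outgoing end of the strand entering at upper-right.
   The arcs (edges between consecutive crossings along the orientation) are
   indexed by their starting outgoing slot; arc e ends at incoming slot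
   [nxt e]; [nxt] is a bijection.  [nloops] counts closed components without
   any crossing. *)
Record fvdiagram := FVDiagram {
  ncross : nat;
  virt : 'I_ncross -> bool;
  nxt : {perm 'I_ncross * bool};
  nloops : nat
}.

Section StateSum.
Variable S : finType.
Variables (ast circ : S -> S -> S).
Variable A : zmodType.
Variable L : fvdiagram.

Definition colouring := ({ffun 'I_(ncross L) * bool -> S} * {ffun 'I_(nloops L) -> S})%type.

Definition incol (th : colouring) (c : 'I_(ncross L)) (s : bool) : S :=
  th.1 ((nxt L)^-1%g (c, s)).

(* At a flat crossing the v-arcs pass straight through
   (a v-arc only ends at virtual crossings), so colours are unchanged. *)
Definition is_colouring (th : colouring) : bool :=
  [forall c : 'I_(ncross L),
     let a := incol th c false in let b := incol th c true in
     if @virt L c then (th.1 (c, false) == ast a b) && (th.1 (c, true) == circ b a)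
     else (th.1 (c, false) == a) && (th.1 (c, true) == b)].

Definition cweight (psi : S -> S -> A) (th : colouring) : A :=
  \sum_(c : 'I_(ncross L) | @virt L c) psi (incol th c false) (incol th c true).

(* The state-sum Phi_psi(L) = sum_theta [weight theta] in Z[A], represented by
   its coefficient function A -> nat: the coefficient of the basis element [x]
   is the number of colourings of weight x. *)
Definition statesum (psi : S -> S -> A) : A -> nat :=
  fun x => #|[set th : colouring | is_colouring th && (cweight psi th == x)]|.

End StateSum.

(* Main.v *)
Require Import Defs.
From mathcomp Require Import all_boot all_order all_algebra all_fingroup.
Import GRing.Theory.
Local Open Scope ring_scope.
From Stdlib Require Import FunctionalExtensionality.

Lemma cobE (S : finType) (ast circ : S -> S -> S) (A : zmodType) (eta : S -> A) a b :
  coboundary2VF ast circ eta a b = eta (ast a b) + eta (circ b a) - eta a - eta b.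
Proof.
rewrite /coboundary2VF /ceval /bdVF /= !big_cons big_nil /=.
rewrite expr1 [(-1)^+2]expr2 mulrNN mulr1 opprK mulrN1z !mulr1z mulrN1z addr0.
rewrite addrC [_ - eta a]addrC !addrA; congr (_ - _).
by rewrite addrC addrA.
Qed.

Lemma sfE (S : finType) (circ : S -> S -> S) (A : zmodType) (psi : S -> S -> A) a1 a2 a3 :
  ceval (ev2 psi) (bdSF circ [:: a1; a2; a3]) =
   - psi a2 a3 + psi a2 (circ a3 a1) + psi a1 a3 - psi a1 (circ a3 a2).
Proof.
rewrite /ceval /bdSF /= !big_cons big_nil /=.
by rewrite expr1 [(-1)^+2]expr2 mulrNN mulr1 opprK mulrN1z !mulr1z mulrN1z addr0 !addrA.
Qed.

Lemma part1 (S : finType) (ast circ : S -> S -> S)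
  (HS : is_vfbiquandle ast circ) (A : zmodType) (eta : S -> A) a1 a2 a3 :
  ceval (ev2 (coboundary2VF ast circ eta)) (bdSF circ [:: a1; a2; a3]) = 0.
Proof.
case: HS => _ [H2 [_ [H4 _]]].
rewrite sfE !cobE.
rewrite -[ast a2 (circ a3 a1)](H4 _ _ _).1 -[ast a1 (circ a3 a2)](H4 _ _ _).1 H2.
rewrite !opprD !opprK !addrA.
by rewrite (ACl ((5*1)*(16*2)*(3*7)*(4*12)*(6*14)*(10*8)*(9*13)*(15*11)))%AC/= !subrr !addr0.
Qed.


Lemma cw0 (S : finType) (ast circ : S -> S -> S) (A : zmodType) (eta : S -> A)
  (L : fvdiagram) (th : colouring S L) :
  is_colouring ast circ th -> cweight (coboundary2VF ast circ eta) th = 0.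
Proof.
move=> H.
rewrite /cweight big_mkcond /=.
transitivity (\sum_c \sum_(s:bool) (eta (th.1 (c,s)) - eta (incol th c s))).
  apply: eq_bigr => c _. move/forallP: H => /(_ c) /=.
  case: (virt c) => /andP[/eqP e1 /eqP e2].
    rewrite cobE big_bool /= -e1 -e2.
    by rewrite (ACl ((2*4)*(1*3)))%AC.
  by rewrite big_bool /= -e1 -e2 !subrr addr0.
rewrite pair_big /= sumrB.
under [X in _ - X]eq_bigr => p _ do rewrite /incol -surjective_pairing.
rewrite [X in X - _](eq_bigr (fun p => eta (th.1 p))); last by case.
rewrite [X in X - _](reindex_inj (@perm_inj _ ((nxt L)^-1)%g)) /=.
by rewrite subrr.
Qed.

Theorem proposition5p5 (S : finType) (ast circ : S -> S -> S)
  (HS : is_vfbiquandle ast circ)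
  (A : zmodType) (HA : forall x : A, x + x = 0 -> x = 0)
  (phi : S -> S -> A)
  (Hphi_VF : cocycle2VF ast circ phi) (Hphi_SF : cocycle2SF circ phi)
  (eta : S -> A) :
  let phi' := coboundary2VF ast circ eta in
  cocycle2SF circ (fun a b => phi a b + phi' a b) /\
  (forall L : fvdiagram,
     statesum ast circ L phi = statesum ast circ L (fun a b => phi a b + phi' a b)).
Proof.
rewrite /=; split.
  move=> a1 a2 a3.
  have h1 := Hphi_SF a1 a2 a3; have h2 := @part1 S ast circ HS A eta a1 a2 a3.
  rewrite sfE in h1; rewrite sfE in h2; rewrite sfE.
  rewrite !opprD !addrA (ACl ((1*3*5*7)*(2*4*6*8)))%AC /=.
  by rewrite h1 h2 addr0.
move=> L; apply: functional_extensionality => x.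
rewrite /statesum; apply: eq_card => th; rewrite !inE.
case H: is_colouring => //=.
have := @cw0 S ast circ A eta L th H; rewrite /cweight => E.
by rewrite big_split /= E addr0.
Qed.
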